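(* Let $X$ be a Hilbert space, $C\subseteq X$ a nonempty subset, $N:C\to S_X$ a mapping, and $r>0$. For $y\in C$ let $B_y$ be the closed ball $B(y-rN(y),r)$, and let $V:=\overline{\operatorname{co}}\big(\bigcup_{y\in C}B_y\big)$ be the closed convex hull of these balls. Then for every $x\in\partial V$ there exists $z_x\in V$ such that the closed ball $B(z_x,r)$ is contained in $V$ and $x\in\partial B(z_x,r)$.
   Context: $S_X$ is the unit sphere of $X$; $B(z,r)$ denotes the closed ball of center $z$ and radius $r$; $\overline{\operatorname{co}}$ denotes the closed convex hull. *)

(* Defs.v *)
From Stdlib Require Import Reals.
Open Scope R_scope.
Set Implicit Arguments.

Record InnerProductSpace := {
  carrier :> Type;
  vzero : carrier;
  vadd : carrier -> carrier -> carrier;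
  vopp : carrier -> carrier;
  vscal : R -> carrier -> carrier;
  inner : carrier -> carrier -> R;
  vadd_assoc : forall x y z, vadd x (vadd y z) = vadd (vadd x y) z;
  vadd_comm : forall x y, vadd x y = vadd y x;
  vadd_0l : forall x, vadd vzero x = x;
  vadd_oppr : forall x, vadd x (vopp x) = vzero;
  vscal_assoc : forall a b x, vscal a (vscal b x) = vscal (a * b) x;
  vscal_1 : forall x, vscal 1 x = x;
  vscal_addl : forall a b x, vscal (a + b) x = vadd (vscal a x) (vscal b x);
  vscal_addr : forall a x y, vscal a (vadd x y) = vadd (vscal a x) (vscal a y);
  inner_sym : forall x y, inner x y = inner y x;
  inner_addl : forall x y z, inner (vadd x y) z = inner x z + inner y z;
  inner_scall : forall a x y, inner (vscal a x) y = a * inner x y;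
  inner_pos : forall x, 0 <= inner x x;
  inner_def : forall x, inner x x = 0 -> x = vzero
}.

Section Ops.
Variable X : InnerProductSpace.

Definition vsub (x y : X) : X := vadd X x (vopp X y).
Definition norm (x : X) : R := sqrt (inner X x x).

Definition cauchy (u : nat -> X) : Prop :=
  forall eps, 0 < eps -> exists N, forall m n, (N <= m)%nat -> (N <= n)%nat ->
    norm (vsub (u m) (u n)) < eps.
Definition converges_to (u : nat -> X) (l : X) : Prop :=
  forall eps, 0 < eps -> exists N, forall n, (N <= n)%nat -> norm (vsub (u n) l) < eps.
Definition complete : Prop :=
  forall u, cauchy u -> exists l, converges_to u l.

Definition closed_ball (z : X) (r : R) : X -> Prop := fun y => norm (vsub y z) <= r.
Definition open_ball (z : X) (r : R) : X -> Prop := fun y => norm (vsub y z) < r.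
Definition unit_sphere : X -> Prop := fun v => norm v = 1.

Definition is_open (U : X -> Prop) : Prop :=
  forall x, U x -> exists eps, 0 < eps /\ forall y, open_ball x eps y -> U y.
Definition is_closed (F : X -> Prop) : Prop := is_open (fun x => ~ F x).
Definition boundary (S : X -> Prop) : X -> Prop := fun x =>
  forall eps, 0 < eps ->
    (exists y, open_ball x eps y /\ S y) /\ (exists y, open_ball x eps y /\ ~ S y).

Definition convex (K : X -> Prop) : Prop :=
  forall x y t, K x -> K y -> 0 <= t <= 1 ->
    K (vadd X (vscal X t x) (vscal X (1 - t) y)).
Definition closed_convex_hull (A : X -> Prop) : X -> Prop := fun x =>
  forall K, convex K -> is_closed K -> (forall a, A a -> K a) -> K x.

End Ops.

Record HilbertSpace := {
  hs_space :> InnerProductSpace;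
  hs_complete : complete hs_space
}.

Arguments vsub {X} x y.
Arguments norm {X} x.
Arguments closed_ball {X} z r _.
Arguments open_ball {X} z r _.

(* Main.v *)
Require Import Defs.
From Stdlib Require Import Reals Lra Psatz Classical ClassicalEpsilon.
Open Scope R_scope.

Lemma inner_zero_l (X : InnerProductSpace) (y : X) : inner X (vzero X) y = 0.
Proof.
  pose proof (inner_addl X (vzero X) (vzero X) y) as H.
  rewrite (vadd_0l X) in H. lra.
Qed.

Lemma inner_oppl (X : InnerProductSpace) (x y : X) : inner X (vopp X x) y = - inner X x y.
Proof.
  pose proof (inner_addl X x (vopp X x) y) as H.
  rewrite (vadd_oppr X), inner_zero_l in H. lra.
Qed.

Lemma inner_addr (X : InnerProductSpace) (x y z : X) :
  inner X x (vadd X y z) = inner X x y + inner X x z.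
Proof. rewrite !(inner_sym X x), inner_addl. reflexivity. Qed.
Lemma inner_scalr (X : InnerProductSpace) a (x y : X) :
  inner X x (vscal X a y) = a * inner X x y.
Proof. rewrite !(inner_sym X x), inner_scall. reflexivity. Qed.
Lemma inner_oppr (X : InnerProductSpace) (x y : X) : inner X x (vopp X y) = - inner X x y.
Proof. rewrite !(inner_sym X x), inner_oppl. reflexivity. Qed.

Lemma vsub_zero_eq (X : InnerProductSpace) (u v : X) : vsub u v = vzero X -> u = v.
Proof.
  unfold vsub; intro H.
  assert (E : vadd X v (vadd X u (vopp X v)) = v) by (rewrite H, (vadd_comm X), (vadd_0l X); auto).
  rewrite (vadd_assoc X), (vadd_comm X v u), <- (vadd_assoc X), (vadd_oppr X),
    (vadd_comm X), (vadd_0l X) in E. exact E.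
Qed.

Lemma vec_ext (X : InnerProductSpace) (u v : X) :
  (forall w, inner X u w = inner X v w) -> u = v.
Proof.
  intro H. apply vsub_zero_eq, (inner_def X).
  unfold vsub. rewrite inner_addl, inner_oppl, H. ring.
Qed.

Ltac vexp X := unfold vsub; repeat rewrite ?(inner_addl X), ?(inner_scall X), ?(inner_oppl X), ?inner_zero_l.
Ltac vid X := apply vec_ext; let w := fresh "w" in intro w; vexp X; ring.

Lemma norm_ge0 (X : InnerProductSpace) (x : X) : 0 <= norm x.
Proof. apply sqrt_pos. Qed.

Lemma norm_sq (X : InnerProductSpace) (x : X) : norm x * norm x = inner X x x.
Proof. apply sqrt_sqrt, inner_pos. Qed.

Lemma inner_exp (X : InnerProductSpace) (x y : X) a :
  inner X (vadd X x (vscal X a y)) (vadd X x (vscal X a y)) =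
  inner X x x + 2 * a * inner X x y + a * a * inner X y y.
Proof.
  rewrite !inner_addl, !inner_addr, !inner_scall, !inner_scalr, (inner_sym X y x). ring.
Qed.

Lemma cs_sq (X : InnerProductSpace) (x y : X) :
  inner X x y * inner X x y <= inner X x x * inner X y y.
Proof.
  destruct (Req_dec (inner X y y) 0) as [H0|H0].
  - apply (inner_def X) in H0. subst y. rewrite (inner_sym X x (vzero X)), !inner_zero_l. nra.
  - pose proof (inner_pos X y). pose proof (inner_pos X x).
    assert (Hp : 0 < inner X y y) by lra.
    pose proof (inner_pos X (vadd X x (vscal X (- (inner X x y / inner X y y)) y))) as P.
    rewrite inner_exp in P.
    set (a := inner X x y) in *. set (b := inner X y y) in *. set (c := inner X x x) in *.
    assert (E: c + 2 * - (a / b) * a + - (a / b) * - (a / b) * b = (c * b - a * a) / b)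
      by (field; lra).
    rewrite E in P.
    assert (0 <= c * b - a * a).
    { apply Rmult_le_reg_r with (/ b). apply Rinv_0_lt_compat; lra.
      rewrite Rmult_0_l. exact P. }
    lra.
Qed.

Lemma cs (X : InnerProductSpace) (x y : X) : inner X x y <= norm x * norm y.
Proof.
  pose proof (cs_sq X x y). pose proof (norm_sq X x). pose proof (norm_sq X y).
  pose proof (norm_ge0 X x). pose proof (norm_ge0 X y).
  assert (0 <= norm x * norm y) by (apply Rmult_le_pos; auto).
  destruct (Rle_dec (inner X x y) (norm x * norm y)) as [|Hn]; auto.
  exfalso. apply Rnot_le_lt in Hn.
  assert (norm x * norm y * (norm x * norm y) < inner X x y * inner X x y) by
    (apply Rmult_le_0_lt_compat; lra).
  nra.
Qed.

Lemma norm_tri (X : InnerProductSpace) (x y : X) : norm (vadd X x y) <= norm x + norm y.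
Proof.
  pose proof (cs X x y). pose proof (norm_sq X x). pose proof (norm_sq X y).
  pose proof (norm_sq X (vadd X x y)).
  pose proof (norm_ge0 X x). pose proof (norm_ge0 X y). pose proof (norm_ge0 X (vadd X x y)).
  rewrite inner_addl, !inner_addr, (inner_sym X y x) in H2.
  nra.
Qed.

Lemma norm_scal (X : InnerProductSpace) a (x : X) : norm (vscal X a x) = Rabs a * norm x.
Proof.
  unfold norm. rewrite inner_scall, inner_scalr, <- Rmult_assoc.
  rewrite sqrt_mult_alt. change (a * a) with (Rsqr a). rewrite sqrt_Rsqr_abs. reflexivity.
  pose proof (Rle_0_sqr a). unfold Rsqr in *. lra.
Qed.

Lemma norm_zero (X : InnerProductSpace) : norm (vzero X) = 0.
Proof. unfold norm. rewrite inner_zero_l. apply sqrt_0. Qed.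

Lemma norm_self (X : InnerProductSpace) (x : X) : norm (vsub x x) = 0.
Proof. unfold vsub. rewrite (vadd_oppr X). apply norm_zero. Qed.

Lemma norm_sym (X : InnerProductSpace) (x y : X) : norm (vsub x y) = norm (vsub y x).
Proof.
  replace (vsub x y) with (vscal X (-1) (vsub y x)) by vid X.
  rewrite norm_scal, Rabs_left by lra. ring.
Qed.

Lemma norm_tri3 (X : InnerProductSpace) (a b c : X) :
  norm (vsub a c) <= norm (vsub a b) + norm (vsub b c).
Proof.
  replace (vsub a c) with (vadd X (vsub a b) (vsub b c)) by vid X.
  apply norm_tri.
Qed.

Lemma cch_sub (X : InnerProductSpace) (A : X -> Prop) a : A a -> closed_convex_hull X A a.
Proof. intros Ha K _ _ HK. auto. Qed.

Lemma cch_convex (X : InnerProductSpace) (A : X -> Prop) : convex X (closed_convex_hull X A).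
Proof. intros x y t Hx Hy Ht K Kc Kcl HK. apply Kc; [apply Hx|apply Hy|]; auto. Qed.

Lemma cch_closed (X : InnerProductSpace) (A : X -> Prop) : is_closed X (closed_convex_hull X A).
Proof.
  intros x Hx. unfold closed_convex_hull in Hx.
  apply not_all_ex_not in Hx. destruct Hx as [K HK].
  apply imply_to_and in HK. destruct HK as [Kc HK].
  apply imply_to_and in HK. destruct HK as [Kcl HK].
  apply imply_to_and in HK. destruct HK as [HA HKx].
  destruct (Kcl x HKx) as [eps [Heps Hb]]. exists eps. split; auto.
  intros y Hy Hcy. apply (Hb y Hy). apply Hcy; auto.
Qed.

Lemma closed_bd_mem (X : InnerProductSpace) (S : X -> Prop) x :
  is_closed X S -> boundary X S x -> S x.
Proof.
  intros Hc Hb. apply NNPP. intro Hn. destruct (Hc x Hn) as [eps [He Hy]].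
  destruct (Hb eps He) as [[y [Hy1 Hy2]] _]. exact (Hy y Hy1 Hy2).
Qed.

Definition Wset (X : InnerProductSpace) (V : X -> Prop) r (z : X) : Prop :=
  forall p, closed_ball z r p -> V p.

Lemma W_closed (X : InnerProductSpace) (V : X -> Prop) r :
  is_closed X V -> is_closed X (Wset X V r).
Proof.
  intros HV z Hz. unfold Wset in Hz.
  apply not_all_ex_not in Hz. destruct Hz as [p Hp].
  apply imply_to_and in Hp. destruct Hp as [Hp HVp].
  destruct (HV p HVp) as [eps [He Hb]]. exists eps. split; auto.
  intros z' Hz' HW.
  apply (Hb (vadd X p (vsub z' z))).
  - unfold open_ball. replace (vsub (vadd X p (vsub z' z)) p) with (vsub z' z) by vid X. exact Hz'.
  - apply HW. unfold closed_ball.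
    replace (vsub (vadd X p (vsub z' z)) z') with (vsub p z) by vid X. exact Hp.
Qed.

Lemma W_convex (X : InnerProductSpace) (V : X -> Prop) r :
  convex X V -> convex X (Wset X V r).
Proof.
  intros HV z1 z2 t H1 H2 Ht p Hp. unfold closed_ball in Hp.
  set (z := vadd X (vscal X t z1) (vscal X (1 - t) z2)) in *.
  set (d := vsub p z).
  assert (E : p = vadd X (vscal X t (vadd X z1 d)) (vscal X (1 - t) (vadd X z2 d)))
    by (unfold d, z; vid X).
  rewrite E. apply HV; auto.
  - apply H1. unfold closed_ball. replace (vsub (vadd X z1 d) z1) with d by vid X. exact Hp.
  - apply H2. unfold closed_ball. replace (vsub (vadd X z2 d) z2) with d by vid X. exact Hp.
Qed.

Definition Dset (X : InnerProductSpace) (W : X -> Prop) r (p : X) : Prop :=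
  forall eps, 0 < eps -> exists w, W w /\ norm (vsub p w) < r + eps.

Lemma D_convex (X : InnerProductSpace) (W : X -> Prop) r :
  convex X W -> convex X (Dset X W r).
Proof.
  intros HW p1 p2 t H1 H2 Ht eps He.
  destruct (H1 eps He) as [w1 [Hw1 N1]]. destruct (H2 eps He) as [w2 [Hw2 N2]].
  exists (vadd X (vscal X t w1) (vscal X (1 - t) w2)). split. apply HW; auto.
  replace (vsub (vadd X (vscal X t p1) (vscal X (1 - t) p2)) (vadd X (vscal X t w1) (vscal X (1 - t) w2)))
    with (vadd X (vscal X t (vsub p1 w1)) (vscal X (1 - t) (vsub p2 w2))) by vid X.
  eapply Rle_lt_trans. apply norm_tri.
  rewrite !norm_scal, (Rabs_pos_eq t), (Rabs_pos_eq (1 - t)) by lra.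
  destruct (Req_dec t 0) as [->|Hnz]. lra.
  assert (t * norm (vsub p1 w1) < t * (r + eps)) by (apply Rmult_lt_compat_l; lra).
  assert ((1 - t) * norm (vsub p2 w2) <= (1 - t) * (r + eps)) by (apply Rmult_le_compat_l; lra).
  lra.
Qed.

Lemma D_closed (X : InnerProductSpace) (W : X -> Prop) r :
  is_closed X (Dset X W r).
Proof.
  intros p Hp. unfold Dset in Hp.
  apply not_all_ex_not in Hp. destruct Hp as [eps Hp].
  apply imply_to_and in Hp. destruct Hp as [He Hp].
  exists (eps / 2). split. lra.
  intros p' Hp' HD. destruct (HD (eps / 2)) as [w [Hw Hn]]. lra.
  apply Hp. exists w. split; auto.
  pose proof (norm_tri3 X p p' w). unfold open_ball in Hp'. rewrite norm_sym in Hp'. lra.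
Qed.

Lemma para (X : InnerProductSpace) (u v : X) :
  inner X (vsub v u) (vsub v u) + 4 * inner X (vscal X (1/2) (vadd X u v)) (vscal X (1/2) (vadd X u v))
  = 2 * inner X u u + 2 * inner X v v.
Proof.
  unfold vsub. repeat rewrite ?inner_addl, ?inner_addr, ?inner_scall, ?inner_scalr, ?inner_oppl, ?inner_oppr. rewrite (inner_sym X v u). field.
Qed.

Lemma inv_small (n N : nat) : (N <= n)%nat -> (0 < N)%nat -> / INR (S n) <= / INR N.
Proof.
  intros H1 H2. apply Rinv_le_contravar. apply lt_0_INR; auto.
  apply le_INR; auto.
Qed.

Lemma proj_exists (X : HilbertSpace) (W : X -> Prop) r x :
  0 < r -> is_closed X W -> convex X W -> (forall w, W w -> r <= norm (vsub x w)) ->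
  Dset X W r x -> exists z, W z /\ norm (vsub x z) = r.
Proof.
  intros hr HWc HWv Hlow HD.
  assert (H : forall n : nat, exists w, W w /\ norm (vsub x w) < r + / INR (S n)).
  { intro n. apply HD. apply Rinv_0_lt_compat, lt_0_INR; lia. }
  set (ws := fun n => proj1_sig (constructive_indefinite_description _ (H n))).
  assert (hws : forall n, W (ws n) /\ norm (vsub x (ws n)) < r + / INR (S n)).
  { intro n. unfold ws. destruct (constructive_indefinite_description _ (H n)); auto. }
  clearbody ws.
  assert (Hepos : forall n, 0 < / INR (S n)) by (intro; apply Rinv_0_lt_compat, lt_0_INR; lia).
  assert (Hbd : forall n m, norm (vsub (ws n) (ws m)) * norm (vsub (ws n) (ws m)) <
     4 * r * / INR (S n) + 2 * (/ INR (S n)) * (/ INR (S n)) + 4 * r * / INR (S m) + 2 * (/ INR (S m)) * (/ INR (S m))).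
  { intros n m.
    set (u := vsub x (ws n)). set (v := vsub x (ws m)).
    pose proof (para X u v) as P.
    replace (vsub v u) with (vsub (ws n) (ws m)) in P. 2:{ unfold u, v. apply vec_ext; intro w; vexp X. ring. }
    set (mid := vadd X (vscal X (1/2) (ws n)) (vscal X (1 - 1/2) (ws m))).
    assert (Wm : W mid) by (apply HWv; try apply hws; lra).
    replace (vscal X (1/2) (vadd X u v)) with (vsub x mid) in P by (unfold u, v, mid; apply vec_ext; intro w; vexp X; field).
    pose proof (Hlow _ Wm) as Lm.
    destruct (hws n) as [Wn Nn]. destruct (hws m) as [Wmm Nm].
    pose proof (Hlow _ Wn) as Ln. pose proof (Hlow _ Wmm) as Lmm.
    rewrite <- !norm_sq in P. fold u v in Nn, Nm, Ln, Lmm.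
    pose proof (Hepos n). pose proof (Hepos m).
    set (en := / INR (S n)) in *. set (em := / INR (S m)) in *.
    assert (norm u * norm u < (r + en) * (r + en)) by nra.
    assert (norm v * norm v < (r + em) * (r + em)) by nra.
    assert (r * r <= norm (vsub x mid) * norm (vsub x mid)) by nra.
    nra. }
  assert (Hc : cauchy X ws).
  { intros eps He.
    set (d := Rmin 1 (eps * eps / (8 * r + 4))).
    assert (Hd : 0 < d). { unfold d. apply Rmin_pos. lra. apply Rdiv_lt_0_compat; nra. }
    assert (Hd1 : d <= 1) by apply Rmin_l.
    assert (Hd2 : d <= eps * eps / (8 * r + 4)) by apply Rmin_r.
    assert (Hd3 : (8 * r + 4) * d <= eps * eps).
    { apply Rmult_le_reg_r with (/ (8 * r + 4)). apply Rinv_0_lt_compat; lra.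
      replace ((8 * r + 4) * d * / (8 * r + 4)) with d by (field; lra). exact Hd2. }
    destruct (archimed_cor1 d Hd) as [N [HN HN0]].
    exists N. intros m n Hm Hn.
    pose proof (Hbd m n) as B.
    pose proof (inv_small m N Hm HN0). pose proof (inv_small n N Hn HN0).
    pose proof (Hepos m). pose proof (Hepos n).
    pose proof (norm_ge0 X (vsub (ws m) (ws n))).
    set (em := / INR (S m)) in *. set (en := / INR (S n)) in *.
    assert (4 * r * em + 2 * em * em + 4 * r * en + 2 * en * en <= (8 * r + 4) * d) by nra.
    nra. }
  destruct (hs_complete X Hc) as [z Hz].
  assert (Wz : W z).
  { apply NNPP. intro Hn. destruct (HWc z Hn) as [eps [He Hb]].
    destruct (Hz eps He) as [N HN]. apply (Hb (ws N)). apply HN. lia. apply hws. }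
  exists z. split; auto.
  apply Rle_antisym.
  - apply Rnot_lt_le. intro Hgt.
    set (e := norm (vsub x z) - r).
    assert (He : 0 < e / 2) by (unfold e; lra).
    destruct (Hz (e / 2) He) as [N1 HN1].
    destruct (archimed_cor1 (e / 2) He) as [N2 [HN2 HN20]].
    set (n := (N1 + N2)%nat).
    pose proof (HN1 n ltac:(unfold n; lia)).
    pose proof (inv_small n N2 ltac:(unfold n; lia) HN20).
    destruct (hws n) as [_ Hn].
    pose proof (norm_tri3 X x (ws n) z).
    unfold e in *. lra.
  - apply Hlow; auto.
Qed.

Theorem claim4p1 (X : HilbertSpace) (C : X -> Prop) (N : X -> X) (r : R)
  (hC : exists c, C c)
  (hN : forall y, C y -> unit_sphere X (N y))
  (hr : 0 < r) :
  let B := fun y : X => closed_ball (vsub y (vscal X r (N y))) r in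
  let V := closed_convex_hull X (fun p => exists y, C y /\ B y p) in
  forall x, boundary X V x ->
    exists z, V z /\ (forall p, closed_ball z r p -> V p) /\
              boundary X (closed_ball z r) x.
Proof.
  intros B V x Hx.
  assert (Vcl : is_closed X V) by apply cch_closed.
  assert (Vcv : convex X V) by apply cch_convex.
  assert (Vx : V x) by (apply closed_bd_mem; auto).
  set (W := Wset X V r).
  assert (Wcl : is_closed X W) by (apply W_closed; auto).
  assert (Wcv : convex X W) by (apply W_convex; auto).
  assert (Wc : forall y, C y -> W (vsub y (vscal X r (N y)))).
  { intros y Hy p Hp. apply cch_sub. exists y. split; auto. }
  assert (DV : forall p, V p -> Dset X W r p).
  { intros p Vp. apply Vp. apply D_convex; auto. apply D_closed.
    intros a [y [Hy Ha]] eps He. exists (vsub y (vscal X r (N y))). split. auto.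
    unfold B, closed_ball in Ha. lra. }
  assert (Hlow : forall w, W w -> r <= norm (vsub x w)).
  { intros w Hw. apply Rnot_lt_le. intro Hlt.
    destruct (Hx (r - norm (vsub x w)) ltac:(lra)) as [_ [y [Hy HVy]]].
    apply HVy. apply Hw. unfold closed_ball. unfold open_ball in Hy.
    pose proof (norm_tri3 X y x w). lra. }
  destruct (proj_exists X W r x hr Wcl Wcv Hlow (DV x Vx)) as [z [Wz Hz]].
  exists z. split; [|split].
  - apply Wz. unfold closed_ball. rewrite norm_self. lra.
  - exact Wz.
  - intros eps He. split.
    + exists x. split. unfold open_ball. rewrite norm_self. lra.
      unfold closed_ball. lra.
    + set (t := eps / (2 * r)).
      assert (Ht : 0 < t) by (unfold t; apply Rdiv_lt_0_compat; lra).
      exists (vadd X x (vscal X t (vsub x z))). split.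
      * unfold open_ball.
        replace (vsub (vadd X x (vscal X t (vsub x z))) x) with (vscal X t (vsub x z)) by vid X.
        rewrite norm_scal, Hz, Rabs_pos_eq by lra.
        unfold t. field_simplify; lra.
      * unfold closed_ball.
        replace (vsub (vadd X x (vscal X t (vsub x z))) z) with (vscal X (1 + t) (vsub x z)) by vid X.
        rewrite norm_scal, Hz, Rabs_pos_eq by lra. nra.
Qed.
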